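(* Let $\Pi$ be a convex self-polar pentagon on the unit sphere $S^2\subset\mathbb{R}^3$. Its diagonals bound a smaller pentagon inside $\Pi$; let $P$ be a point inside this smaller pentagon, and let $\rho$ be the central projection (from the center of the sphere) of the relevant open hemisphere onto the plane tangent to $S^2$ at $P$. Then the image $\rho(\Pi)$ is a planar pentagon whose five altitudes (for each vertex, the line through that vertex perpendicular to the opposite side) are concurrent, and they all pass through $P$.
   Context: A spherical pentagon with sides on great circles is self-polar if each vertex is the pole of the great circle containing the opposite side, i.e. each vertex (as a unit vector in $\mathbb{R}^3$) is orthogonal to the plane of the opposite side. Central projection maps a point $v$ of the open hemisphere centered at $P$ to the intersection of the line $\mathbb{R}v$ with the tangent plane $\{x: \langle x,P\rangle=1\}$; it maps great circles to straight lines. *)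

(* Defs.v *)
From HB Require Import structures.
From mathcomp Require Import all_boot all_order all_algebra.
Set Implicit Arguments. Unset Strict Implicit. Unset Printing Implicit Defensive.
Import Order.TTheory GRing.Theory Num.Theory.
Local Open Scope ring_scope.

Section Defs.
Variable R : realFieldType.
Notation vec := 'rV[R]_3.

Definition dot (u v : vec) : R := \sum_(k < 3) u 0 k * v 0 k.

Definition det3 (u v w : vec) : R :=
  \det (\matrix_(i < 3, j < 3)
          (if (i : nat) == 0%N then u 0 j else if (i : nat) == 1%N then v 0 j else w 0 j)).

Definition sh (i : 'I_5) (k : nat) : 'I_5 := inZp (i + k).

Definition on_sphere (v : vec) : Prop := dot v v = 1.

(* Convex spherical pentagon with vertices v 0, ..., v 4 (cyclic order):
   for every side [v i, v (i+1)], all other vertices lie strictly on one side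
   of the great circle through that side, with the same orientation for all
   sides. *)
Definition convex_sph_pentagon (v : 'I_5 -> vec) : Prop :=
  (forall i j : 'I_5, j != i -> j != sh i 1 -> 0 < det3 (v i) (v (sh i 1)) (v j)) \/
  (forall i j : 'I_5, j != i -> j != sh i 1 -> det3 (v i) (v (sh i 1)) (v j) < 0).

(* Self-polar: each vertex v i is orthogonal to the plane spanned by the
   opposite side [v (i+2), v (i+3)]. *)
Definition self_polar (v : 'I_5 -> vec) : Prop :=
  forall i : 'I_5, dot (v i) (v (sh i 2)) = 0 /\ dot (v i) (v (sh i 3)) = 0.

(* P lies in the (open) inner pentagon bounded by the diagonals: for every
   diagonal [v i, v (i+2)], P lies strictly on the side of its great circle
   containing v (i+3) (and v (i+4)), i.e. opposite to v (i+1). *)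
Definition in_inner_pentagon (v : 'I_5 -> vec) (P : vec) : Prop :=
  forall i : 'I_5,
    0 < det3 (v i) (v (sh i 2)) P * det3 (v i) (v (sh i 2)) (v (sh i 3)).

(* central projection from the origin onto the tangent plane {x | <x,P> = 1} *)
Definition cproj (P v : vec) : vec := (dot v P)^-1 *: v.

(* w 0..w 4 form a convex planar pentagon in the tangent plane at P
   (orientation measured with the normal P) *)
Definition convex_planar_pentagon (P : vec) (w : 'I_5 -> vec) : Prop :=
  (forall i j : 'I_5, j != i -> j != sh i 1 ->
      0 < det3 P (w (sh i 1) - w i) (w j - w i)) \/
  (forall i j : 'I_5, j != i -> j != sh i 1 ->
      det3 P (w (sh i 1) - w i) (w j - w i) < 0).

End Defs.

(* Main.v *)
Require Import Defs.
From HB Require Import structures.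
From mathcomp Require Import all_boot all_order all_algebra.
From mathcomp Require Import ring lra zify.
Import Order.TTheory GRing.Theory Num.Theory.
Local Open Scope ring_scope.

Section Aux.
Variable R : realFieldType.
Notation vec := 'rV[R]_3.
Definition crd (x : vec) (n : nat) : R := x 0 (inord n).
Lemma ordE (x : vec) (j : 'I_3) : x 0 j = crd x j.
Proof. by rewrite /crd inord_val. Qed.

Lemma dotE (u v : vec) : dot u v = crd u 0 * crd v 0 + crd u 1 * crd v 1 + crd u 2 * crd v 2.
Proof. rewrite /dot !big_ord_recl big_ord0 !ordE /=. ring. Qed.

Lemma det3E (u v w : vec) : det3 u v w =
  crd u 0 * (crd v 1 * crd w 2 - crd v 2 * crd w 1)
 - crd u 1 * (crd v 0 * crd w 2 - crd v 2 * crd w 0)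
 + crd u 2 * (crd v 0 * crd w 1 - crd v 1 * crd w 0).
Proof.
rewrite /det3 (expand_det_row _ ord0) !big_ord_recl big_ord0 /cofactor.
rewrite !(expand_det_row _ ord0) !big_ord_recl !big_ord0 /cofactor !det_mx11 !mxE /=.
rewrite !ordE /= /bump /=.
ring.
Qed.

Lemma crdB (a b : vec) n : crd (a - b) n = crd a n - crd b n.
Proof. by rewrite /crd !mxE. Qed.
Lemma crdZ k (a : vec) n : crd (k *: a) n = k * crd a n.
Proof. by rewrite /crd !mxE. Qed.

Lemma identG (a b c x y : vec) : det3 a b c * dot x y =
  det3 x b c * dot a y + det3 a x c * dot b y + det3 a b x * dot c y.
Proof. rewrite !det3E !dotE. ring. Qed.

Lemma plucker (a b c d x : vec) :
  det3 a b c * det3 a d x - det3 a b d * det3 a c x + det3 a b x * det3 a c d = 0.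
Proof. rewrite !det3E. ring. Qed.

Lemma det3_cyc (a b c : vec) : det3 a b c = det3 b c a.
Proof. rewrite !det3E. ring. Qed.
Lemma det3_swap (a b c : vec) : det3 a b c = - det3 b a c.
Proof. rewrite !det3E. ring. Qed.
Lemma dotC (a b : vec) : dot a b = dot b a.
Proof. rewrite !dotE. ring. Qed.
Lemma dotZl k (a b : vec) : dot (k *: a) b = k * dot a b.
Proof. rewrite !dotE !crdZ. ring. Qed.

Lemma dotBl (a b c : vec) : dot (a - b) c = dot a c - dot b c.
Proof. rewrite !dotE !crdB. ring. Qed.

Lemma det3_proj (P a b c : vec) :
  dot P P = 1 -> 0 < dot a P -> 0 < dot b P -> 0 < dot c P ->
  det3 P (cproj P b - cproj P a) (cproj P c - cproj P a) =
  (dot a P)^-1 * (dot b P)^-1 * (dot c P)^-1 * det3 a b c.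
Proof.
move=> hP ha hb hc.
set A := cproj P a; set B := cproj P b; set C := cproj P c.
have one : forall x : vec, 0 < dot x P -> dot (cproj P x) P = 1.
  move=> x hx; rewrite /cproj dotZl mulVf //; exact: lt0r_neq0.
have hA := one a ha; have hB := one b hb; have hC := one c hc.
have h := identG A (B - A) (C - A) P P.
have e1 : dot (B - A) P = 0 by rewrite dotBl hA hB subrr.
have e2 : dot (C - A) P = 0 by rewrite dotBl hA hC subrr.
rewrite e1 e2 hA hP !mulr0 !addr0 !mulr1 in h.
have e3 : det3 A (B - A) (C - A) = det3 A B C by rewrite !det3E !crdB; ring.
rewrite -h e3 /A /B /C /cproj !det3E !crdZ. ring.
Qed.

Lemma alt_expand (P a c d : vec) ia ic id :
  dot (P - ia *: a) (ic *: c - id *: d) =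
  ic * dot c P - id * dot d P - ia * ic * dot a c + ia * id * dot a d.
Proof. rewrite !dotE !crdB !crdZ. ring. Qed.

Lemma pos_of_prod (x y : R) : 0 < x * y -> 0 < y -> 0 < x.
Proof. by move=> h1 h2; rewrite -(pmulr_lgt0 x h2). Qed.

End Aux.

Lemma neqS {T : eqType} {x y : T} : x != y -> y != x.
Proof. by rewrite eq_sym. Qed.

Lemma valsh (i : 'I_5) k : val (sh i k) = ((i + k) %% 5)%N.
Proof. by []. Qed.

Lemma sh_neq (i : 'I_5) k : (0 < k < 5)%N -> sh i k != i.
Proof.
move=> hk; apply/eqP => /(congr1 val); rewrite valsh /= => h.
have := ltn_ord i; lia.
Qed.

Lemma sh_neq2 (i : 'I_5) k l : (k < 5)%N -> (l < 5)%N -> k <> l -> sh i k != sh i l.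
Proof.
move=> hk hl hkl; apply/eqP => /(congr1 val); rewrite !valsh /= => h.
have := ltn_ord i; lia.
Qed.

Lemma sh_sh (i : 'I_5) a b c : ((a + b) %% 5 = c %% 5)%N -> sh (sh i a) b = sh i c.
Proof.
move=> h; apply: val_inj; rewrite !valsh /=.
have := ltn_ord i; lia.
Qed.

Lemma sh_self (i : 'I_5) a : (a %% 5 = 0)%N -> sh i a = i.
Proof.
move=> h; apply: val_inj; rewrite !valsh /=.
have := ltn_ord i; lia.
Qed.

Theorem mainTheorem2 (R : realFieldType) (v : 'I_5 -> 'rV[R]_3) (P : 'rV[R]_3) :
  (forall i, on_sphere (v i)) ->
  convex_sph_pentagon v ->
  self_polar v ->
  on_sphere P ->
  in_inner_pentagon v P ->
  (* the whole pentagon lies in the open hemisphere centred at P *)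
  (forall i, 0 < dot (v i) P) /\
  (* its image is a (convex) planar pentagon in the tangent plane at P *)
  convex_planar_pentagon P (fun i => cproj P (v i)) /\
  (* the altitude from each vertex (perpendicular to the opposite side)
     passes through P; hence the five altitudes are concurrent at P *)
  (forall i : 'I_5,
     dot (P - cproj P (v i))
         (cproj P (v (sh i 2)) - cproj P (v (sh i 3))) = 0).
Proof.
move=> hsph hconv hpol hP hin.
have [s [hs hs1 conv]] : exists s : R, [/\ s = 1 \/ s = -1, s * s = 1 &
   forall i j : 'I_5, j != i -> j != sh i 1 -> 0 < s * det3 (v i) (v (sh i 1)) (v j)].
  case: hconv => h.
    by exists 1; split; [left | rewrite mulr1 | move=> i j h1 h2; rewrite mul1r; apply: h].
  exists (-1); split; [by right | by rewrite mulrNN mulr1 | move=> i j h1 h2].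
  by rewrite mulN1r oppr_gt0; apply: h.
have step1 : forall k : 'I_5, 0 < s * det3 (v k) (v (sh k 1)) P.
  move=> k.
  have h1 := conv k (sh k 2) (sh_neq k 2 isT) (sh_neq2 k 2 1 isT isT (fun e => ltac:(discriminate))).
  have h2 := conv k (sh k 3) (sh_neq k 3 isT) (sh_neq2 k 3 1 isT isT (fun e => ltac:(discriminate))).
  have h3 := conv (sh k 2) k.
  rewrite (sh_sh k 2 1 3 erefl) in h3.
  have {h3} h3 := h3 (neqS (sh_neq k 2 isT)) (neqS (sh_neq k 3 isT)).
  have h4 := hin k.
  have h5 := hin (sh k 3).
  rewrite (sh_sh k 3 2 0 erefl) (sh_sh k 3 3 1 erefl) (sh_self k 0 erefl) in h5.
  rewrite -det3_cyc in h3.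
  have e : det3 (v (sh k 3)) (v k) P * det3 (v (sh k 3)) (v k) (v (sh k 1)) =
     - det3 (v k) (v (sh k 3)) P * det3 (v k) (v (sh k 1)) (v (sh k 3)).
    by rewrite !det3E; ring.
  rewrite e in h5.
  have pl := plucker _ (v k) (v (sh k 1)) (v (sh k 2)) (v (sh k 3)) P.
  move: h1 h2 h3 h4 h5 pl.
  set X := det3 (v k) (v (sh k 1)) (v (sh k 2)).
  set Y := det3 (v k) (v (sh k 1)) (v (sh k 3)).
  set Z := det3 (v k) (v (sh k 2)) (v (sh k 3)).
  set U := det3 (v k) (v (sh k 2)) P.
  set V := det3 (v k) (v (sh k 3)) P.
  set W := det3 (v k) (v (sh k 1)) P.
  move=> h1 h2 h3 h4 h5 pl.
  clearbody X Y Z U V W.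
  have hU : 0 < s * U.
    apply: (@pos_of_prod _ _ (s * Z)) => //.
    by rewrite mulrACA hs1 mul1r.
  have hV : 0 < s * - V.
    apply: (@pos_of_prod _ _ (s * Y)) => //.
    by rewrite mulrACA hs1 mul1r.
  apply: (@pos_of_prod _ _ (s * Z)) => //.
  have -> : s * W * (s * Z) = (s * Y) * (s * U) + (s * X) * (s * - V)
      + s * s * (X * V - Y * U + W * Z) by ring.
  rewrite pl mulr0 addr0.
  by apply: addr_gt0; apply: mulr_gt0.
have step2 : forall j : 'I_5, 0 < dot (v j) P.
  move=> j.
  have h1 := conv (sh j 2) j.
  rewrite (sh_sh j 2 1 3 erefl) in h1.
  have {h1} h1 := h1 (neqS (sh_neq j 2 isT)) (neqS (sh_neq j 3 isT)).
  have h2 := step1 (sh j 2).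
  rewrite (sh_sh j 2 1 3 erefl) in h2.
  have [p2 p3] := hpol j.
  have g := identG _ (v (sh j 2)) (v (sh j 3)) (v j) P (v j).
  rewrite [dot (v (sh j 2)) _]dotC [dot (v (sh j 3)) _]dotC p2 p3 (hsph j) in g.
  rewrite !mulr0 !add0r mulr1 in g.
  rewrite dotC.
  apply: (@pos_of_prod _ _ (s * det3 (v (sh j 2)) (v (sh j 3)) (v j))) => //.
  by rewrite mulrC -mulrA g.
split => //.
split.
  have key : forall i j : 'I_5, j != i -> j != sh i 1 ->
      0 < s * det3 P (cproj P (v (sh i 1)) - cproj P (v i)) (cproj P (v j) - cproj P (v i)).
    move=> i j h1 h2.
    rewrite det3_proj // mulrCA.
    apply: mulr_gt0; last exact: conv.
    by rewrite !mulr_gt0 // invr_gt0.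
  case: hs => hs; [left | right] => i j h1 h2; have := key i j h1 h2; rewrite hs.
    by rewrite mul1r.
  by rewrite mulN1r oppr_gt0.
move=> i.
rewrite /cproj alt_expand.
have [p2 p3] := hpol i.
rewrite p2 p3 !mulr0 !subr0 !addr0 !mulVf //; first by rewrite subrr.
- exact: lt0r_neq0.
- exact: lt0r_neq0.
Qed.
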